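(* Let $S$ be an instance of 3-Partition (with $n_1\ge\cdots\ge n_{3m}$) and let $w_S$ and $\mathrm{Ver}_S$ be as defined below. (i) For any sequence of non-negative integers $\langle i_k\rangle_{k=1}^{3m}$ such that $i_{3j-2}+i_{3j-1}+i_{3j}=B$ for every $j\in\{1,\dots,m\}$, there is a computation $\varepsilon\,\|\,w_S\vdash^*\prod_{k=1}^{3m}(a_1b^{i_k}a_2)\,\|\,\mathrm{Ver}_S$. (ii) Conversely, if $\varepsilon\,\|\,w_S\vdash^* W\,\|\,\mathrm{Ver}_S\vdash^*\varepsilon\,\|\,\varepsilon$ (i.e. the configuration $W\,\|\,\mathrm{Ver}_S$ is reached in an accepting computation of $w_S$), then $W=\prod_{k=1}^{3m}(a_1b^{i_k}a_2)$ for some non-negative integers $i_1,\dots,i_{3m}$ satisfying $i_{3j-2}+i_{3j-1}+i_{3j}=B$ for every $j\in\{1,\dots,m\}$.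
   Context: Queue automaton: a configuration is written $Q\,\|\,x$ ($Q$ = queue contents, $x$ = remaining input); a step from $Q\,\|\,\sigma x$ ($\sigma$ a symbol) goes either to $Q\sigma\,\|\,x$ (push) or, if $Q=\sigma Q'$, to $Q'\,\|\,x$ (match/pop). $\vdash^*$ is zero or more steps; $\varepsilon$ is the empty string; an accepting computation of $w$ is a computation $\varepsilon\,\|\,w\vdash^*\varepsilon\,\|\,\varepsilon$. An instance of 3-Partition is a sequence $S=\langle n_i:1\le i\le 3m\rangle$ of natural numbers such that $B=(\sum_{i=1}^{3m}n_i)/m$ is an integer and $B/4<n_i<B/2$ for all $i$; throughout, the $n_i$ are assumed to be in non-increasing order. The alphabet is $\{a_1,a_2,b,e_0,e,c_1,c_2,x,y\}$; $u^i$ denotes $i$ concatenated copies of $u$ and $\prod_{\ell=1}^k u_\ell=u_1u_2\cdots u_k$. Define $U_\ell=a_1^2b^\ell a_2^2$, $v_\ell=c_1x^\ell y^\ell c_2$, $D_k=U_{n_k}^{3m-k+1}$, $E_k=U_B^{3m-k}\,a_1b^{n_k}a_2\,U_B^{3m-k}$, $F_k=U_B^{2(3m-k)}$, and $\mathrm{Load}_S=e_0\prod_{i=1}^m(b^{2B}e)$, $\mathrm{Dist}_S=e_0\prod_{i=1}^m((a_1b^Ba_2)^3e)$, $\mathrm{Ver}_S=\prod_{k=1}^{3m}[v_{4k-3}D_kv_{4k-3}\,v_{4k-2}D_kv_{4k-2}\,v_{4k-1}E_kv_{4k-1}\,v_{4k}F_kv_{4k}]$, and $w_S=\mathrm{Load}_S\mathrm{Dist}_S\mathrm{Ver}_S$.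 *)

(* Defs.v *)
From mathcomp Require Import all_boot.
Set Implicit Arguments. Unset Strict Implicit. Unset Printing Implicit Defensive.

Inductive sym := a1 | a2 | b | e0 | e | c1 | c2 | x | y.

(* Queue automaton configurations Q || w, as pairs (Q, w). *)
Definition config := (seq sym * seq sym)%type.

Inductive qstep : config -> config -> Prop :=
| qpush (Q w : seq sym) (s : sym) : qstep (Q, s :: w) (rcons Q s, w)
| qpop (Q w : seq sym) (s : sym) : qstep (s :: Q, s :: w) (Q, w).

Inductive qsteps : config -> config -> Prop :=
| qsteps_refl c : qsteps c c
| qsteps_step c1' c2' c3' : qstep c1' c2' -> qsteps c2' c3' -> qsteps c1' c3'.

Definition pw (u : seq sym) (i : nat) : seq sym := flatten (nseq i u).

(* 1-based access n_k of the instance S = <n_1, ..., n_{3m}> *)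
Definition nk (S : seq nat) (k : nat) : nat := nth 0 S k.-1.

Definition three_partition_instance (m B : nat) (S : seq nat) : Prop :=
  0 < m /\ size S = 3 * m /\ sumn S = m * B /\
  (forall k, 1 <= k <= 3 * m -> B < 4 * nk S k /\ 2 * nk S k < B).

Section Words.
Variables (m B : nat) (S : seq nat).

Definition U (l : nat) : seq sym := [:: a1; a1] ++ nseq l b ++ [:: a2; a2].
Definition v (l : nat) : seq sym := c1 :: nseq l x ++ nseq l y ++ [:: c2].
Definition D (k : nat) : seq sym := pw (U (nk S k)) (3 * m - k + 1).
Definition E (k : nat) : seq sym :=
  pw (U B) (3 * m - k) ++ [:: a1] ++ nseq (nk S k) b ++ [:: a2] ++ pw (U B) (3 * m - k).
Definition F (k : nat) : seq sym := pw (U B) (2 * (3 * m - k)).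

Definition Load : seq sym := e0 :: pw (nseq (2 * B) b ++ [:: e]) m.
Definition Dist : seq sym := e0 :: pw (pw ([:: a1] ++ nseq B b ++ [:: a2]) 3 ++ [:: e]) m.
Definition Ver_block (k : nat) : seq sym :=
  v (4 * k - 3) ++ D k ++ v (4 * k - 3) ++
  v (4 * k - 2) ++ D k ++ v (4 * k - 2) ++
  v (4 * k - 1) ++ E k ++ v (4 * k - 1) ++
  v (4 * k) ++ F k ++ v (4 * k).
Definition Ver : seq sym := flatten [seq Ver_block k | k <- iota 1 (3 * m)].
Definition wS : seq sym := Load ++ Dist ++ Ver.

Definition Wof (i : nat -> nat) : seq sym :=
  flatten [seq [:: a1] ++ nseq (i k) b ++ [:: a2] | k <- iota 1 (3 * m)].

Definition triple_sums_B (i : nat -> nat) : Prop :=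
  forall j, 1 <= j <= m -> i (3 * j - 2) + i (3 * j - 1) + i (3 * j) = B.
End Words.

(* Main.v *)
Require Import Defs.
From mathcomp Require Import all_boot.
From HB Require Import structures.
From mathcomp Require Import zify.

Definition sym_eqb (s t : sym) : bool :=
  match s, t with
  | a1, a1 | a2, a2 | b, b | e0, e0 | e, e | c1, c1 | c2, c2 | x, x | y, y => true
  | _, _ => false end.
Lemma sym_eqP : Equality.axiom sym_eqb.
Proof. by case; case; constructor. Qed.
HB.instance Definition _ := hasDecEq.Build sym sym_eqP.

Inductive run : seq sym -> seq sym -> seq sym -> Prop :=
| run_nil Q : run Q [::] Q
| run_push Q s u W : run (rcons Q s) u W -> run Q (s :: u) W
| run_pop Q s u W : run Q u W -> run (s :: Q) (s :: u) W.

Lemma run_nilE Q W : run Q [::] W -> W = Q.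
Proof. by move=> H; inversion H. Qed.

Lemma run_consE Q s u W : run Q (s :: u) W ->
  run (rcons Q s) u W \/ exists Q', Q = s :: Q' /\ run Q' u W.
Proof. move=> H; inversion H; subst; eauto. Qed.

Lemma run_cat Q u1 u2 W : run Q (u1 ++ u2) W -> exists Q', run Q u1 Q' /\ run Q' u2 W.
Proof.
elim: u1 Q => [|s u1 IH] Q /=; first by move=> H; exists Q; split => //; constructor.
case/run_consE => [H|[Q' [-> H]]].
  by have [Q2 [H1 H2]] := IH _ H; exists Q2; split => //; constructor.
by have [Q2 [H1 H2]] := IH _ H; exists Q2; split => //; constructor.
Qed.

Lemma run_catI Q u1 u2 Q' W : run Q u1 Q' -> run Q' u2 W -> run Q (u1 ++ u2) W.
Proof. by elim=> [//|{}Q s u Q2 _ IH|{}Q s u Q2 _ IH] H /=; constructor; apply: IH. Qed.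

Lemma qsteps_size c c' : qsteps c c' -> size c'.2 <= size c.2.
Proof.
elim=> [//|? ? ? H _ IH]; case: H IH => Q w s /= IH; exact: leqW.
Qed.

Lemma qsteps_run c c' : qsteps c c' -> forall Q u r W, c = (Q, u ++ r) -> c' = (W, r) -> run Q u W.
Proof.
elim=> [c0|c1' c2' c3' Hs Hss IH] Q u r W.
  move=> -> [-> Hr]; have := congr1 size Hr; rewrite size_cat.
  by case: u {Hr} => [|? ?] /=; [constructor | lia].
case: u => [|s u] /= E1 E3.
  have := qsteps_size _ _ Hss; rewrite E3 /=.
  by case: Hs E1 => Q0 w0 s0 [_ <-] /=; lia.
subst c1' c3'; inversion Hs; subst.
  by apply: run_push; exact: (IH _ _ r _ erefl erefl).
by apply: run_pop; exact: (IH _ _ r _ erefl erefl).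
Qed.

Lemma run_qsteps Q u W r : run Q u W -> qsteps (Q, u ++ r) (W, r).
Proof.
elim=> [{}Q|{}Q s {}u {}W _ IH|{}Q s {}u {}W _ IH]; first by constructor.
  apply: qsteps_step IH; constructor.
apply: qsteps_step IH; constructor.
Qed.

Lemma accept_mem c c' : qsteps c c' -> c' = ([::], [::]) -> forall s, s \in c.1 -> s \in c.2.
Proof.
elim=> [c0 -> //|c1' c2' c3' Hs _ IH] E s; move: (IH E s) => {}IH.
case: Hs IH => Q w s0 /= IH.
  by move=> H; rewrite in_cons IH ?orbT // mem_rcons in_cons H orbT.
by rewrite !in_cons; case/orP => [->//|H]; rewrite IH ?orbT.
Qed.

Lemma run_count s Q u W : run Q u W -> count_mem s Q <= count_mem s W + count_mem s u.
Proof.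
elim=> [{}Q|{}Q s0 {}u {}W _ IH|{}Q s0 {}u {}W _ IH] /=; first lia.
  by move: IH; rewrite -cats1 count_cat /=; lia.
by rewrite addnCA leq_add2l.
Qed.

Lemma run_push_all Q u : run Q u (Q ++ u).
Proof.
elim: u Q => [|s u IH] Q; first by rewrite cats0; constructor.
by constructor; rewrite -cat_rcons; apply: IH.
Qed.

Lemma run_keep s Q u W : run Q u W -> s \in Q -> s \notin u -> s \in W.
Proof.
elim=> [//|{}Q s0 {}u {}W _ IH|{}Q s0 {}u {}W _ IH] H /=.
  by rewrite in_cons negb_or => /andP[_ ?]; apply: IH; rewrite // mem_rcons in_cons H orbT.
rewrite in_cons negb_or => /andP[ne ?]; apply: IH => //.
by move: H; rewrite in_cons (negbTE ne).
Qed.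

Lemma run_keep_front s0 Q u W : s0 \notin u -> run (s0 :: Q) u W -> W = s0 :: Q ++ u.
Proof.
elim: u Q => [|s u IH] Q; first by move=> _ /run_nilE ->; rewrite cats0.
rewrite in_cons negb_or => /andP[ne nu]; case/run_consE => [H|[Q' [[E] _]]].
  by rewrite (IH _ nu H) /= cat_rcons.
by move: ne; rewrite E eqxx.
Qed.

Definition unitW (i : nat) : seq sym := [:: a1] ++ nseq i b ++ [:: a2].

Lemma b_anal N k R Q' : run (nseq k b ++ e :: R) (nseq N b) Q' ->
  exists i, [/\ i <= N, N - i <= k & Q' = nseq (k - (N - i)) b ++ e :: R ++ nseq i b].
Proof.
elim: N k R => [|N IH] k R /=.
  by move/run_nilE ->; exists 0; split; rewrite ?subn0 ?cats0.
case/run_consE => [H|[Q0 [E H]]].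
  move: H; rewrite rcons_cat rcons_cons => /IH [i [hi hk ->]].
  by exists i.+1; rewrite subSS cat_rcons.
case: k E => [|k] //= [E]; subst Q0.
have [i [hi hk ->]] := IH _ _ H.
exists i; split; [lia|lia|].
by have -> : k.+1 - (N.+1 - i) = k - (N - i) by lia.
Qed.

Lemma push_one s k R Q' : s != b -> s != e -> run (nseq k b ++ e :: R) [:: s] Q' ->
  Q' = nseq k b ++ e :: rcons R s.
Proof.
move=> nb ne; case/run_consE => [/run_nilE ->|[Q0 [E _]]].
  by rewrite rcons_cat rcons_cons.
case: k E => [|k] /= [E]; subst; by rewrite eqxx in nb ne.
Qed.

Lemma unit_anal N k R Q' : run (nseq k b ++ e :: R) (unitW N) Q' ->
  exists i, [/\ i <= N, N - i <= k & Q' = nseq (k - (N - i)) b ++ e :: R ++ unitW i].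
Proof.
rewrite /unitW => /run_cat [Q1 [/push_one H1 /run_cat [Q2 [H2 H3]]]].
have {}H1 := H1 isT isT; subst Q1.
have [i [hi hk E]] := b_anal _ _ _ _ H2; subst Q2.
have {}H3 := push_one a2 _ _ _ isT isT H3; subst Q'.
exists i; split => //.
by rewrite -cats1 -!catA /= cat_rcons.
Qed.

Lemma pops p R u W : run R u W -> run (nseq p b ++ R) (nseq p b ++ u) W.
Proof. by elim: p => [//|p IH] H /=; apply: run_pop; apply: IH. Qed.

Lemma b_cons p r q R : run (nseq (p + r) b ++ R) (nseq (p + q) b) (nseq r b ++ R ++ nseq q b).
Proof.
rewrite !nseqD -catA; apply: pops.
by have := run_push_all (nseq r b ++ R) (nseq q b); rewrite -catA.
Qed.

Lemma unit_cons k R N i : i <= N -> N - i <= k ->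
  run (nseq k b ++ R) (unitW N) (nseq (k - (N - i)) b ++ R ++ unitW i).
Proof.
move=> hi hk; rewrite /unitW /=; apply: run_push.
rewrite rcons_cat.
have := b_cons (N - i) (k - (N - i)) i (rcons R a1).
rewrite subnKC // subnK // => H.
apply: (run_catI _ _ _ _ _ H).
have := run_push_all (nseq (k - (N - i)) b ++ rcons R a1 ++ nseq i b) [:: a2].
by rewrite -!catA cat_rcons !cat_rcons.
Qed.

Definition unitQ (B : nat) : seq sym := nseq (2 * B) b ++ [:: e].
Definition blk (B : nat) : seq sym := pw (unitW B) 3 ++ [:: e].

Lemma pwS (u : seq sym) n : pw u n.+1 = u ++ pw u n.
Proof. by []. Qed.

Lemma blkE B : blk B = unitW B ++ unitW B ++ unitW B ++ e :: [::].
Proof. by rewrite /blk /pw; move: (unitW B) => u /=; rewrite cats0 -!catA. Qed.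

Lemma flat_cons (f : nat -> seq sym) i l : flatten (map f (i :: l)) = f i ++ flatten (map f l).
Proof. by []. Qed.

Lemma count_pw (s : sym) u n : count_mem s (pw u n) = n * count_mem s u.
Proof. by elim: n => [//|n IH]; rewrite pwS count_cat IH mulSn. Qed.

Lemma count_unitQ B : count_mem e (unitQ B) = 1.
Proof. by rewrite /unitQ count_cat count_nseq. Qed.
Lemma count_blk B : count_mem e (blk B) = 1.
Proof. by rewrite blkE /unitW !count_cat count_nseq. Qed.
Lemma count_unitW i : count_mem e (unitW i) = 0.
Proof. by rewrite /unitW !count_cat count_nseq. Qed.

Lemma pwQ B n P : pw (unitQ B) n.+1 ++ P = nseq (2*B) b ++ e :: (pw (unitQ B) n ++ P).
Proof. by rewrite pwS /unitQ -!catA. Qed.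
Lemma pwB B n : pw (blk B) n.+1 = unitW B ++ unitW B ++ unitW B ++ e :: pw (blk B) n.
Proof. by rewrite pwS blkE -!catA. Qed.

Definition sums3 (B n : nat) (l : seq nat) :=
  forall q, q < n -> nth 0 l (3 * q) + nth 0 l (3 * q + 1) + nth 0 l (3 * q + 2) = B.

Lemma sums3S B n i1 i2 i3 l : sums3 B n.+1 [:: i1, i2, i3 & l] <->
  (i1 + i2 + i3 = B /\ sums3 B n l).
Proof.
split.
  move=> H; split; first by have := H 0 isT.
  move=> q hq; have := H q.+1 hq.
  have -> : 3 * q.+1 + 1 = (3 * q + 1).+3 by lia.
  have -> : 3 * q.+1 + 2 = (3 * q + 2).+3 by lia.
  by have -> : 3 * q.+1 = (3 * q).+3 by lia.
move=> [h0 H] [|q] hq //.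
have -> : 3 * q.+1 + 1 = (3 * q + 1).+3 by lia.
have -> : 3 * q.+1 + 2 = (3 * q + 2).+3 by lia.
have -> : 3 * q.+1 = (3 * q).+3 by lia.
exact: H.
Qed.

Lemma blocks_anal B n P W : count_mem e P = 0 -> count_mem e W = 0 ->
  run (pw (unitQ B) n ++ P) (pw (blk B) n) W ->
  exists l, [/\ size l = 3 * n, sums3 B n l & W = P ++ flatten (map unitW l)].
Proof.
elim: n P => [|n IH] P hP hW.
  by move/run_nilE ->; exists [::]; split => //; rewrite cats0.
rewrite pwQ pwB.
set R := pw (unitQ B) n ++ P.
move/(run_cat _ _ _ _) => [Q1 [/unit_anal [i1 [h1 k1 ->]]]].
move/(run_cat _ _ _ _) => [Q2 [/unit_anal [i2 [h2 k2 ->]]]].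
move/(run_cat _ _ _ _) => [Q3 [/unit_anal [i3 [h3 k3 ->]]]].
case/run_consE => [H|[Q0 [E H]]].
  have := run_count e _ _ _ H; rewrite hW count_pw count_blk -cats1 !count_cat.
  rewrite !count_nseq /R /= !count_cat ?count_nseq count_pw count_unitQ /=; lia.
move: E; case E3: (_ - (B - i3)) => [|k] //= [E]; subst Q0.
move: H; rewrite -!catA => /IH [].
- by rewrite !count_cat !count_nseq hP.
- by [].
move=> l' [sl' hl' ->].
exists [:: i1, i2, i3 & l']; split.
- by rewrite /= sl'; lia.
- by apply/sums3S; split => //; lia.
by rewrite !flat_cons -!catA.
Qed.

Lemma blocks_cons B n P l : size l = 3 * n -> sums3 B n l ->
  run (pw (unitQ B) n ++ P) (pw (blk B) n) (P ++ flatten (map unitW l)).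
Proof.
elim: n P l => [|n IH] P l.
  by case: l => // _ _; rewrite cats0; constructor.
case: l => [|i1 [|i2 [|i3 l]]] sl hs; rewrite /= in sl; try (exfalso; lia).
have {}sl : size l = 3 * n by lia.
move/sums3S: hs => [h0 hl].
rewrite pwQ pwB.
set R := pw (unitQ B) n ++ P.
have g1 := unit_cons (2*B) (e :: R) B i1 ltac:(lia) ltac:(lia).
have g2 := unit_cons (2*B - (B - i1)) ((e :: R) ++ unitW i1) B i2 ltac:(lia) ltac:(lia).
have g3 := unit_cons (2*B - (B - i1) - (B - i2)) (((e :: R) ++ unitW i1) ++ unitW i2) B i3 ltac:(lia) ltac:(lia).
have k30 : 2*B - (B - i1) - (B - i2) - (B - i3) = 0 by lia.
rewrite k30 in g3.
apply: (run_catI _ _ _ _ _ g1); apply: (run_catI _ _ _ _ _ g2); apply: (run_catI _ _ _ _ _ g3).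
rewrite !flat_cons; change (nseq 0 b) with (@nil sym).
rewrite cat0s !cat_cons /R -!catA; apply: run_pop.
have := IH (P ++ unitW i1 ++ unitW i2 ++ unitW i3) l sl hl.
by rewrite -!catA.
Qed.

Lemma all_flat (p : pred sym) (ss : seq (seq sym)) : all p (flatten ss) = all (all p) ss.
Proof. by elim: ss => [//|s ss IH] /=; rewrite all_cat IH. Qed.

Lemma all_pw (p : pred sym) u n : all p (pw u n) = (n == 0) || all p u.
Proof. by rewrite /pw all_flat all_nseq. Qed.

Lemma Ver_good m B S : all (fun s => (s != e) && (s != e0)) (Ver m B S).
Proof.
rewrite /Ver all_flat all_map; apply/allP => k _ /=.
rewrite /Ver_block /v /D /E /F /U !all_cat /= !all_cat !all_pw /= !all_cat !all_nseq /=.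
by do 6 (rewrite ?all_cat ?all_pw ?all_nseq /= ?orbT ?andbT ?andTb).
Qed.

Theorem lemma4 (m B : nat) (S : seq nat) :
  three_partition_instance m B S ->
  sorted geq S ->
  (forall i : nat -> nat, triple_sums_B m B i ->
     qsteps ([::], wS m B S) (Wof m i, Ver m B S)) /\
  (forall W : seq sym,
     qsteps ([::], wS m B S) (W, Ver m B S) ->
     qsteps (W, Ver m B S) ([::], [::]) ->
     exists i : nat -> nat, triple_sums_B m B i /\ W = Wof m i).
Proof.
move=> _ _.
have LE : Defs.Load m B = e0 :: pw (unitQ B) m by [].
have DE : Dist m B = e0 :: pw (blk B) m by [].
split.
  move=> i hi.
  set l := [seq i k | k <- iota 1 (3 * m)].
  have sl : size l = 3 * m by rewrite size_map size_iota.
  have hl : sums3 B m l.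
    move=> q hq.
    rewrite /l !(nth_map 0) ?size_iota ?nth_iota; try lia.
    have := hi q.+1 ltac:(lia).
    have -> : 3 * q.+1 - 2 = 1 + 3 * q by lia.
    have -> : 3 * q.+1 - 1 = 1 + (3 * q + 1) by lia.
    by have -> : 3 * q.+1 = 1 + (3 * q + 2) by lia.
  have -> : Wof m i = flatten (map unitW l) by rewrite /l -map_comp.
  rewrite /wS catA; apply: run_qsteps.
  apply: (run_catI _ _ _ _ _ (run_push_all [::] (Defs.Load m B))).
  rewrite /= LE DE; apply: run_pop.
  by have := blocks_cons B m [::] l sl hl; rewrite cats0.
move=> W H1 H2.
have good : forall s, s \in W -> (s != e) && (s != e0).
  move=> s /(accept_mem _ _ H2 erefl) /= hs.
  exact: (allP (Ver_good m B S)).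
have R : run [::] (Defs.Load m B ++ Dist m B) W.
  apply: (qsteps_run _ _ H1 [::] _ (Ver m B S)) => //.
  by rewrite /wS catA.
have [Q1 [RL RD]] := run_cat _ _ _ _ R.
rewrite LE in RL; case/run_consE: RL => [RL|[Q' [E _]]] //.
have nL : e0 \notin pw (unitQ B) m.
  by apply/count_memPn; rewrite count_pw /unitQ count_cat count_nseq /= muln0.
have {}RL := run_keep_front e0 [::] _ _ nL RL; subst Q1.
rewrite DE in RD; case/run_consE: RD => [RD|[Q' [[E] RD]]].
  have nD : e0 \notin pw (blk B) m.
    by apply/count_memPn; rewrite count_pw blkE /unitW !count_cat !count_nseq /= muln0.
  have := run_keep e0 _ _ _ RD; rewrite mem_rcons in_cons eqxx => /(_ isT nD) /good.
  by rewrite eqxx andbF.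
subst Q'.
have cW : count_mem e W = 0.
  apply/count_memPn; apply/negP => /good; by rewrite eqxx.
move: RD; rewrite -[pw (unitQ B) m]cats0 => /(blocks_anal B m [::] W erefl cW).
move=> [l [sl hl ->]].
exists (fun k => nth 0 l k.-1); split.
  move=> j hj; have := hl j.-1 ltac:(lia).
  have -> : (3 * j - 2).-1 = 3 * j.-1 by lia.
  have -> : (3 * j - 1).-1 = 3 * j.-1 + 1 by lia.
  by have -> : (3 * j).-1 = 3 * j.-1 + 2 by lia.
rewrite /Wof cat0s.
have -> : [seq [:: a1] ++ nseq (nth 0 l k.-1) b ++ [:: a2] | k <- iota 1 (3 * m)]
  = map unitW [seq nth 0 l k.-1 | k <- iota 1 (3 * m)] by rewrite -map_comp.
congr flatten; congr map.
rewrite -sl -[1]/(1 + 0) iotaDl -map_comp.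
symmetry; exact: mkseq_nth.
Qed.
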